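(* Let $0<r<\frac12$ and let $X\subseteq S^1$ be a finite subset. If $X$ is an $\varepsilon$-covering of $S^1$ for some $\varepsilon>0$, then $\mathrm{wf}_{<}(X;r)>r-2\varepsilon$.
   Context: $S^1$ is the circle of circumference $1$ with arc-length metric; points are identified with numbers in $[0,1)$ and $\vec d(x,y)$ is the clockwise distance from $x$ to $y$. $X$ is an $\varepsilon$-covering of $S^1$ if every point of $S^1$ is at distance less than $\varepsilon$ from some point of $X$. For finite $X$ and $0<r<\frac12$, $\overrightarrow{\mathbf{VR}}_{<}(X;r)$ is the directed graph on $X$ with $x_1\to x_2$ iff $0<\vec d(x_1,x_2)<r$, a cyclic graph with respect to the clockwise order of $X$, and $\mathrm{wf}_{<}(X;r)$ is its winding fraction: $\sup\{k/n:\exists$ cyclic homomorphism $\overrightarrow{C_n^k}\to\overrightarrow{\mathbf{VR}}_{<}(X;r)\}$. Here $\overrightarrow{C_n^k}$ ($0\le k<n/2$) has vertices $\{0,\dots,n-1\}$ with $i\to j$ iff $0<(j-i)\bmod n\le k$; a cyclic homomorphism between cyclic graphs (directed graphs with cyclic vertex orders $v_0\prec\cdots\prec v_{n-1}$ such that $v_i\to v_j$ implies $j=i+1$ or both $v_i\to v_{j-1}$, $v_{i+1}\to v_j$) is a vertex map that sends each edge $v\to w$ to an edge or a single vertex, whose fibres are cyclic intervals of consecutive vertices, which satisfies ''$f(s)\prec f(s')\prec f(s'')$ in cyclic betweenness implies $s\prec s'\prec s''$'', and which is non-constant if the source has a directed cycle. *)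

(* Defs.v *)
From HB Require Import structures.
From mathcomp Require Import ssreflect ssrfun ssrbool eqtype ssrnat div seq path choice fintype finset fingraph order ssralg ssrnum ssrint archimedean.
From mathcomp Require Import classical_sets reals.
Set Implicit Arguments. Unset Strict Implicit. Unset Printing Implicit Defensive.
Import Order.TTheory GRing.Theory Num.Theory.
Local Open Scope ring_scope.

(* ---------- The circle S^1 = R/Z, points represented in [0,1) ---------- *)
Section Circle.
Variable R : realType.

(* clockwise distance from x to y: the representative of y - x in [0,1) *)
Definition cw_dist (x y : R) : R := (y - x) - (Num.floor (y - x))%:~R.

Definition circ_dist (x y : R) : R := Num.min (cw_dist x y) (cw_dist y x).

Definition in_S1 (x : R) : bool := (0 <= x) && (x < 1).

Definition eps_covering (X : seq R) (eps : R) : Prop :=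
  forall p : R, in_S1 p -> exists2 x, x \in X & circ_dist p x < eps.
End Circle.

(* ---------- Cyclic graphs: vertices 'I_n with cyclic order 0 < 1 < ... < n-1 *)

Definition cyc_btw (a b c : nat) : bool :=
  [|| (a < b < c)%N, (b < c < a)%N | (c < a < b)%N].

(* A is a cyclic interval of consecutive vertices {a, a+1, ..., a+l-1} (mod n)
   (l = 0 gives the empty set, l = n the whole vertex set) *)
Definition cyc_interval (n : nat) (A : {set 'I_n}) : Prop :=
  exists a l : nat, (l <= n)%N /\ A = [set i : 'I_n | ((i + n - a %% n) %% n < l)%N].

Definition has_dicycle (T : finType) (e : rel T) : Prop :=
  exists x y, e x y /\ connect e y x.

Definition cyc_hom (n m : nat) (eG : rel 'I_n) (eH : rel 'I_m) (f : 'I_n -> 'I_m)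
  : Prop :=
  [/\ (forall v w, eG v w -> eH (f v) (f w) \/ f v = f w),
      (forall y : 'I_m, cyc_interval [set s | f s == y]),
      (forall s s' s'' : 'I_n, cyc_btw (f s) (f s') (f s'') -> cyc_btw s s' s'')
    & (has_dicycle eG -> exists s s', f s <> f s')].

Definition Cnk_edge (n k : nat) : rel 'I_n :=
  fun i j => (0 < (j + n - i) %% n <= k)%N.
Arguments Cnk_edge : clear implicits.

Section VR.
Variable R : realType.

(* vertices of VR_<(X;r): the points of X listed in clockwise (increasing) order *)
Definition cw_sorted (X : seq R) : seq R := sort <=%R X.

Definition VR_edge (X : seq R) (r : R) : rel 'I_(size X) :=
  fun i j => let x1 := nth 0 (cw_sorted X) i in let x2 := nth 0 (cw_sorted X) j in
    (0 < cw_dist x1 x2) && (cw_dist x1 x2 < r).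
Arguments VR_edge : clear implicits.

Definition wf_lt (X : seq R) (r : R) : R :=
  sup [set q : R | exists (n k : nat), (2 * k < n)%N /\
        (exists f : 'I_n -> 'I_(size X), cyc_hom (Cnk_edge n k) (VR_edge X r) f) /\
        q = ((k%:R : R) / (n%:R : R))%R].
End VR.

(* Main.v *)
Require Import Defs.
From HB Require Import structures.
From mathcomp Require Import ssreflect ssrfun ssrbool eqtype ssrnat div seq path choice fintype finset fingraph order ssralg ssrnum ssrint archimedean.
From mathcomp Require Import classical_sets reals.
From mathcomp Require Import lra zify.
Import Order.TTheory GRing.Theory Num.Theory.
Local Open Scope ring_scope.

Lemma cwE {R : realType} (a b : R) : in_S1 a -> in_S1 b ->
  cw_dist a b = if a <= b then b - a else b - a + 1.
Proof.
move=> /andP[a0 a1] /andP[b0 b1]; rewrite /cw_dist.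
case: ifP => ab.
  have -> : Num.floor (b - a) = 0 by apply: floor_def; rewrite /= !rmorphD /=; lra.
  by rewrite subr0.
have -> : Num.floor (b - a) = -1.
  apply: floor_def; rewrite rmorphN rmorph1 /= addNr; move/negbT: ab; rewrite -ltNge => ab; lra.
by rewrite rmorphN rmorph1 opprK.
Qed.

Lemma gapmax {R : realType} (g : nat -> R) c m : 0 < c -> (forall j, (j < m)%N -> g j < c) ->
  exists d, [/\ 0 <= d, d < c & forall j, (j < m)%N -> g j <= d].
Proof.
move=> c0; elim: m => [|m IH] H.
  by exists 0; split => //; lra.
have [d [d0 dc dj]] : exists d, [/\ 0 <= d, d < c & forall j, (j < m)%N -> g j <= d].
  by apply: IH => j jm; apply: H; lia.
have gm := H m (ltnSn m).
case: (lerP (g m) d) => gmd.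
  exists d; split=> // j; rewrite ltnS leq_eqVlt => /orP[/eqP->//|]; exact: dj.
exists (g m); split => //; first lra.
move=> j; rewrite ltnS leq_eqVlt => /orP[/eqP->//|/dj]; lra.
Qed.

Lemma mono_fiber n m (F : 'I_n -> 'I_m) :
  (forall i j : 'I_n, (i <= j)%N -> (F i <= F j)%N) ->
  forall y : 'I_m, cyc_interval [set s | F s == y].
Proof.
move=> Fmono y.
pose g (s : nat) : nat := if (insub s : option 'I_n) is Some i then val (F i) else m.
have gF (i : 'I_n) : g i = F i by rewrite /g valK.
have gn s : (n <= s)%N -> g s = m.
  by move=> ns; rewrite /g insubF //; apply/negbTE; rewrite -leqNgt.
have gmono s t : (s <= t)%N -> (g s <= g t)%N.
  move=> st; case: (ltnP t n) => tn.
    have sn : (s < n)%N by apply: leq_ltn_trans tn.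
    by rewrite -[s]/(val (Ordinal sn)) -[t]/(val (Ordinal tn)) !gF; apply: Fmono.
  rewrite (gn t tn); case: (ltnP s n) => sn.
    by rewrite -[s]/(val (Ordinal sn)) gF; apply: ltnW.
  by rewrite gn.
have ex1 : exists s, (y <= g s)%N by exists n; rewrite gn // ltnW.
have ex2 : exists s, (y < g s)%N by exists n; rewrite gn.
pose a := ex_minn ex1; pose b := ex_minn ex2.
have [Ha Hamin] : (y <= g a)%N /\ (forall s, (y <= g s)%N -> (a <= s)%N).
  by rewrite /a; case: ex_minnP.
have [Hb Hbmin] : (y < g b)%N /\ (forall s, (y < g s)%N -> (b <= s)%N).
  by rewrite /b; case: ex_minnP.
have ab : (a <= b)%N by apply: Hamin; apply: ltnW.
have bn : (b <= n)%N by apply: Hbmin; rewrite gn.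
have key s : (g s == y) = (a <= s < b)%N.
  case: (ltnP s a) => sa /=.
    apply/negbTE; apply/eqP => gsy.
    by have := Hamin s; rewrite gsy leqnn => /(_ isT); rewrite leqNgt sa.
  case: (ltnP s b) => sb.
    have h1 := gmono _ _ sa.
    have h2 : (g s <= y)%N by rewrite leqNgt; apply/negP => /Hbmin; rewrite leqNgt sb.
    by apply/eqP; apply/eqP; rewrite eqn_leq h2 (leq_trans Ha h1).
  have := gmono _ _ sb; move: Hb; lia.
exists a, (b - a)%N; split; first lia.
apply/setP => i; rewrite !inE.
have -> : (F i == y) = (g i == y) by rewrite gF.
rewrite key.
have ilt := ltn_ord i.
case: (ltnP a n) => an.
  rewrite (modn_small an).
  case: (leqP a i) => ai /=.
    have -> : (i + n - a = (i - a) + n)%N by lia.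
    rewrite modnDr modn_small; last by lia.
    lia.
  rewrite modn_small; last by lia.
  lia.
have -> : a = n by lia.
have -> : b = n by lia.
rewrite subnn ltn0 /=; apply/negbTE; lia.
Qed.

Lemma mono_cyc_hom n m k (eH : rel 'I_m) (F : 'I_n -> 'I_m) :
 (forall i j : 'I_n, (i <= j)%N -> (F i <= F j)%N) ->
 (forall v w, Cnk_edge n k v w -> eH (F v) (F w) \/ F v = F w) ->
 (exists s s', F s <> F s') ->
 cyc_hom (Cnk_edge n k) eH F.
Proof.
move=> Fmono Fe Fnc; split => //.
- exact: mono_fiber.
- have lt i j : (F i < F j)%N -> (i < j)%N.
    by move=> h; rewrite ltnNge; apply/negP => /Fmono; rewrite leqNgt h.
  move=> s s' s''; rewrite /cyc_btw => /or3P[/andP[h1 h2]|/andP[h1 h2]|/andP[h1 h2]];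
  apply/or3P; [apply: Or31|apply: Or32|apply: Or33]; by rewrite (lt _ _ h1) (lt _ _ h2).
Qed.

Lemma cwP {R : realType} (a b : R) : in_S1 a -> in_S1 b ->
  (a <= b /\ cw_dist a b = b - a) \/ (b < a /\ cw_dist a b = b - a + 1).
Proof.
move=> aS bS; rewrite (cwE _ _ aS bS); case: (lerP a b) => h; [left|right]; done.
Qed.

Lemma inv_lt {R : realType} (a b : R) : 0 < a -> a^-1 < b -> b^-1 < a.
Proof.
move=> a0 ab; have b0 : 0 < b by apply: lt_trans ab; rewrite invr_gt0.
by rewrite -[X in _ < X](invrK a) ltf_pV2 // posrE invr_gt0.
Qed.

Theorem proposition5p2 (R : realType) (r eps : R) (X : seq R) :
  0 < r -> r < 2^-1 ->
  uniq X -> all (@in_S1 R) X ->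
  0 < eps -> eps_covering X eps ->
  r - 2 * eps < wf_lt X r.
Proof.
move=> r0 rhalf uX allX eps0 cov.
set m := size X.
have ub : has_ubound [set q : R | exists (n k : nat), (2 * k < n)%N /\
        (exists f : 'I_n -> 'I_(size X), cyc_hom (Cnk_edge n k) (@VR_edge R X r) f) /\
        q = ((k%:R : R) / (n%:R : R))%R].
  exists 1 => q [n [k [kn [_ ->]]]].
  have n0 : 0 < (n%:R : R) by rewrite ltr0n; clear -kn; lia.
  by rewrite ler_pdivrMr // mul1r ler_nat; clear -kn; lia.
have le_wf := ub_le_sup ub.
have mpos : (0 < m)%N.
  have h0 : in_S1 (0 : R) by rewrite /in_S1 lexx ltr01.
  have [z zX _] := cov 0 h0.
  by rewrite /m; case: (X) zX.
case: (ltrP (r - 2 * eps) 0) => hre.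
  apply: (lt_le_trans hre); apply: le_wf.
  exists 1%N, 0%N; split => //; split; last by rewrite mul0r.
  exists (fun _ => Ordinal mpos); split.
  - by move=> v w; rewrite /Cnk_edge => /andP[h1 h2]; clear -h1 h2; lia.
  - by apply: mono_fiber.
  - by move=> s s' s'' /or3P[]/andP[h _]; move: h; rewrite ltnn.
  - by move=> [v [w [e _]]]; move: e; rewrite /Cnk_edge => /andP[h1 h2]; clear -h1 h2; lia.
               
set xs := cw_sorted X.
have sz : size xs = m by rewrite size_sort.
have xsS : sorted <%R xs.
  by rewrite lt_sorted_uniq_le sort_uniq uX sort_sorted //; apply: le_total.
have inS i : (i < m)%N -> in_S1 (nth 0 xs i).
  move=> im; apply: (allP allX); rewrite -(mem_sort <=%R); apply: mem_nth; by rewrite sz.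
pose x i := nth 0 xs i.
pose y i := if (i < m)%N then x i else x 0%N + 1.
have [x00 x01] : 0 <= x 0%N /\ x 0%N < 1 by have /andP[] := inS 0%N mpos.
have yx i : (i < m)%N -> y i = x i by rewrite /y => ->.
have ym : y m = x 0%N + 1 by rewrite /y ltnn.
have ylt i j : (i < j <= m)%N -> y i < y j.
  move=> /andP[ij jm]; have im : (i < m)%N by apply: leq_trans jm.
  rewrite (yx i im); case: (ltnP j m) => jm'.
    rewrite (yx j jm'); apply: (sorted_ltn_nth lt_trans 0 xsS); by rewrite ?inE ?sz.
  have -> : j = m by apply/eqP; rewrite eqn_leq jm jm'.
  have /andP[_ h] := inS i im; rewrite ym; move: h x00; rewrite /x; lra.
have yle i j : (i <= j <= m)%N -> y i <= y j.
  move=> /andP[ij jm]; case: (ltnP i j) => h.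
    by apply: ltW; apply: ylt; rewrite h jm.
  by have -> : i = j by apply/eqP; rewrite eqn_leq ij h.
          
have gap j : (j < m)%N -> y j.+1 - y j < 2 * eps.
  move=> jm; rewrite ltNge; apply/negP => hg.
  have /andP[yj0 yj1] := inS j jm; rewrite -/(x j) -(yx j jm) in yj0 yj1.
  have [p [pS hp]] : exists p, in_S1 p /\ (p = y j + eps \/ p = y j + eps - 1).
    case: (ltrP (y j + eps) 1) => h.
      exists (y j + eps); split; last by left.
      by apply/andP; split; lra.
    exists (y j + eps - 1); split; last by right.
    by apply/andP; split; lra.
  have [z zX dz] := cov p pS.
  have : z \in xs by rewrite mem_sort.
  case/(nthP 0) => i; rewrite sz => im zi.
  have zS : in_S1 z by rewrite -zi; apply: inS.
  have yi : y i = z by rewrite yx.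
  have h0 : y 0%N <= y j by apply: yle; clear -jm; lia.
  have h1 : y j.+1 <= y m by apply: yle; clear -jm; lia.
  have h2 : y 0%N <= y i by apply: yle; clear -im; lia.
  rewrite (yx 0%N mpos) in h0 h2; rewrite ym in h1.
  have h3 : y i <= y j \/ y j.+1 <= y i.
    case: (leqP i j) => ij; [left|right]; apply: yle; clear -ij im jm; lia.
  rewrite /circ_dist gt_min in dz.
  have /andP[z0 z1] := zS.
  have /andP[p0 p1] := pS.
  have hz : (p - eps < z /\ z < p + eps) \/ (p - eps < z + 1 /\ z + 1 < p + eps)
     \/ (p - eps < z - 1 /\ z - 1 < p + eps).
    case/orP: dz => dz.
      have [[q1 q2]|[q1 q2]] := cwP _ _ pS zS; rewrite q2 in dz.
        by left; split; lra.
      by right; right; split; lra.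
    have [[q1 q2]|[q1 q2]] := cwP _ _ zS pS; rewrite q2 in dz.
      by left; split; lra.
    by right; left; split; lra.
  rewrite yi in h3 h2.
  case: hz => [[hz1 hz2]|[[hz1 hz2]|[hz1 hz2]]]; case: hp => hp; case: h3 => h3; lra.
have m2 : (1 < m)%N.
  case: (ltnP 1 m) => // hm.
  have m1 : m = 1%N by clear -hm mpos; lia.
  have := gap 0%N mpos; have -> : y 1%N = y m by rewrite m1.
  rewrite ym (yx 0%N mpos); lra.
have [d [d0 dc dj]] := gapmax (fun j => y j.+1 - y j) (2 * eps) m (mulr_gt0 (ltr0Sn _ 1) eps0) gap.

have c0 : 0 < 2 * eps - d by lra.
have c'0 : 0 < y m - y 1%N by rewrite subr_gt0; apply: ylt; clear -m2; lia.
pose n := (Num.trunc ((2 * eps - d)^-1 + (y m - y 1%N)^-1)).+1.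
have nM : (2 * eps - d)^-1 + (y m - y 1%N)^-1 < n%:R by apply: truncnS_gt.
have n0 : 0 < (n%:R : R) by rewrite ltr0Sn.
have i1 : 0 < (2 * eps - d)^-1 by rewrite invr_gt0.
have i2 : 0 < (y m - y 1%N)^-1 by rewrite invr_gt0.
have hn1 : n%:R^-1 < 2 * eps - d by apply: inv_lt => //; lra.
have hn2 : n%:R^-1 < y m - y 1%N by apply: inv_lt => //; lra.
pose k := Num.trunc ((r - d) * n%:R).
have [k1 k2] : k%:R <= (r - d) * n%:R /\ (r - d) * n%:R < k.+1%:R.
  by apply/andP; apply: trunc_itv; apply: mulr_ge0; lra.
have kn : k%:R / n%:R <= r - d by rewrite ler_pdivrMr.
have kn' : r - 2 * eps < k%:R / n%:R.
  have : r - d < k.+1%:R / n%:R by rewrite ltr_pdivlMr.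
  rewrite -natr1 mulrDl mul1r; lra.
have k2n : (2 * k < n)%N.
  rewrite -(ltr_nat R) natrM.
  have : (r - d) * n%:R < 2^-1 * n%:R by rewrite ltr_pM2r //; lra.
  lra.
pose t (i : nat) := x 0%N + i%:R / n%:R.
pose P i j := (t i < y j.+1) || (m.-1 <= j)%N.
have exP i : exists j, P i j by exists m.-1; rewrite /P leqnn orbT.
pose Fn i := ex_minn (exP i).
have FnP i : P i (Fn i) /\ forall j, P i j -> (Fn i <= j)%N by rewrite /Fn; case: ex_minnP.
have Fnm i : (Fn i < m)%N.
  have := (FnP i).2 m.-1; rewrite /P leqnn orbT => /(_ isT) h; apply: leq_ltn_trans h _; by rewrite ltn_predL.
have tlt i : (i < n)%N -> t i < x 0%N + 1.
  move=> iN; rewrite /t ltrD2l ltr_pdivrMr // mul1r ltr_nat //.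
have tge i : x 0%N <= t i by rewrite /t lerDl divr_ge0.
have P2 i : (i < n)%N -> t i < y (Fn i).+1.
  move=> iN; case/orP: (FnP i).1 => // h.
  have -> : (Fn i).+1 = m.
    by have := Fnm i; move: h; move: (Fn i) => f h1 h2; clear -h1 h2 mpos; lia.
  by rewrite ym; apply: tlt.
have P1 i : y (Fn i) <= t i.
  have := (FnP i).2; case: (Fn i) => [|j] hm.
    by rewrite (yx 0%N mpos).
  have : ~~ P i j by apply/negP => /hm; rewrite ltnn.
  by rewrite /P negb_or -leNgt => /andP[].
have tmono i i' : (i <= i')%N -> t i <= t i'.
  move=> ii; rewrite /t lerD2l; apply: ler_wpM2r; first by rewrite invr_ge0 ltW.
  by rewrite ler_nat.
have Fmono i i' : (i <= i')%N -> (i' < n)%N -> (Fn i <= Fn i')%N.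
  move=> ii iN; apply: (FnP i).2; rewrite /P; apply/orP; left.
  exact: le_lt_trans (tmono _ _ ii) (P2 _ iN).
pose F (i : 'I_n) : 'I_m := Ordinal (Fnm i).
have xy j : (j < m)%N -> nth 0 xs j = y j by move=> jm; rewrite yx.
apply: (lt_le_trans kn'); apply: le_wf.
exists n, k; split => //; split => //.
exists F; apply: mono_cyc_hom.
- by move=> i j ij; apply: Fmono.
- move=> v w; rewrite /Cnk_edge => /andP[dpos dk].
  have vn := ltn_ord v; have wn := ltn_ord w.
  have ddk : (((w + n - v) %% n)%:R / n%:R : R) <= k%:R / n%:R.
    by apply: ler_wpM2r; [rewrite invr_ge0 ltW | rewrite ler_nat].
  move: ddk dpos; set dd := ((w + n - v) %% n)%N => ddk dpos.
  have ya := P1 v; have yb := P1 w; have ya' := P2 v vn.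
  have dja := dj (Fn v) (Fnm v).
  have aS := inS _ (Fnm v); have bS := inS _ (Fnm w).
  have xa := xy _ (Fnm v); have xb := xy _ (Fnm w).
  case: (leqP v w) => vw.
    have hdd : dd = (w - v)%N.
      rewrite /dd (_ : (w + n - v = (w - v) + n)%N); last by clear -vw vn; lia.
      rewrite modnDr modn_small //; clear -vw vn wn; lia.
    have hR : (dd%:R : R) + v%:R = w%:R by rewrite -natrD hdd subnK.
    have tw : t w = t v + dd%:R / n%:R by rewrite /t -hR mulrDl; lra.
    have ab := Fmono _ _ vw wn.
    case: (eqVneq (Fn v) (Fn w)) => e; first by right; apply: val_inj.
    have ab' : (Fn v < Fn w)%N by rewrite ltn_neqAle e.
    have yab : y (Fn v) < y (Fn w) by apply: ylt; rewrite ab' ltnW.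
    have ya1 : y (Fn v).+1 <= y (Fn w) by apply: yle; rewrite ab' ltnW.
    left; rewrite /VR_edge /=; move: aS bS; rewrite /xs in xa xb * => aS bS.
    rewrite xa xb in aS bS *.
    have [[q1 q2]|[q1 q2]] := cwP _ _ aS bS; rewrite q2; apply/andP; split; lra.
  have hdd : dd = (w + n - v)%N by rewrite /dd modn_small //; clear -vw vn wn; lia.
  have hR : (dd%:R : R) + v%:R = w%:R + n%:R by rewrite -!natrD hdd; congr (_%:R); clear -vw vn wn; lia.
  have tw : t w + 1 = t v + dd%:R / n%:R.
    rewrite /t; have -> : (dd%:R / n%:R : R) = w%:R / n%:R + n%:R / n%:R - v%:R / n%:R.
      by rewrite -mulrDl -mulrBl -hR addrK.
    rewrite divff ?lt0r_neq0 //; lra.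
  have ab := Fmono _ _ (ltnW vw) vn.
  case: (eqVneq (Fn w) (Fn v)) => e; first by right; apply: val_inj.
  have ab' : (Fn w < Fn v)%N by rewrite ltn_neqAle e.
  have yab : y (Fn w) < y (Fn v) by apply: ylt; rewrite ab' ltnW.
  left; rewrite /VR_edge /=; move: aS bS; rewrite /xs in xa xb * => aS bS.
  rewrite xa xb in aS bS *.
  have /andP[a0 a1] := aS; have /andP[b0 b1] := bS.
  have [[q1 q2]|[q1 q2]] := cwP _ _ aS bS; rewrite q2; apply/andP; split; lra.
- have n1 : (n.-1 < n)%N by rewrite /n.
  have n0' : (0 < n)%N by rewrite /n.
  exists (Ordinal n0'), (Ordinal n1) => /(congr1 val) /=.
  have F0 : Fn 0%N = 0%N.
    apply/eqP; rewrite -leqn0; apply: (FnP 0%N).2; rewrite /P; apply/orP; left.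
    rewrite /t mul0r addr0 -(yx 0%N mpos); apply: ylt; clear -m2; lia.
  rewrite F0 => /esym Fn1.
  have := P2 _ n1; rewrite Fn1.
  have : t n.-1 = x 0%N + 1 - n%:R^-1.
    rewrite /t -[n in n.-1]/((Num.trunc _).+1) /= -[(Num.trunc _)%:R]addr0 -(subrr 1) addrA natr1 -/n.
    rewrite mulrBl divff ?lt0r_neq0 // mul1r; lra.
  rewrite ym in hn2; lra.
Qed.
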